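(* Let $X=\{x_1,\dots,x_S\}\subset\mathbb{R}^A$ be finite and $K\ge1$. The reduced-space branch and bound algorithm for the $K$-center problem described in the context terminates after finitely many steps.
   Context: The $K$-center problem is $z=\min_{\mu^1,\dots,\mu^K\in X}\max_s\min_k\|x_s-\mu^k\|_2^2$. Root region: the box $M_0=M_0^1\times\cdots\times M_0^K$, $M_0^k=\{\mu^k:\min_s x_{s,a}\le\mu^k_a\le\max_s x_{s,a}\ \forall a\}$. Nodes are boxes $M=M^1\times\cdots\times M^K$. Lower bound $\beta(M)=\max_s\min_k\min_{\mu^k\in M^k}\|x_s-\mu^k\|_2^2$; upper bound $\alpha(M)$ is the objective value at a feasible $\hat\mu\in X\cap M$. Algorithm: maintain a list of nodes, initially $\{M_0\}$; repeatedly remove a node with least lower bound, tighten it (shrinking boxes without excluding optimal solutions, including replacing each $M^k$ by the smallest box containing $X\cap M^k$); if $|X\cap M^k|>1$ for some $k$, bisect at its midpoint the coordinate $\mu^k_a$ of largest range, keeping a child only if each of its $K$ boxes contains a sample; update the best lower bound $\beta_i$ (minimum of $\beta$ over the list) and best upper bound $\alpha_i$; delete nodes with $\beta(M')\ge\alpha_i$; stop if $\alpha_i-\beta_i\le\epsilon$ (tolerance $\epsilon\ge0$) or the list is empty. *)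

(* Defs.v *)
(* Model of the reduced-space branch-and-bound algorithm
   for the (discrete) K-center problem, as a nondeterministic transition
   system; "terminates" = every run reaches the stopping state. *)
From HB Require Import structures.
From mathcomp Require Import all_boot all_order all_algebra.
From mathcomp Require Import reals.

Set Implicit Arguments.
Unset Strict Implicit.
Unset Printing Implicit Defensive.

Import Order.TTheory GRing.Theory Num.Theory.
Local Open Scope ring_scope.

Section KCenterBB.

Variable R : realType.
Variables (S A K : nat).
Variable x : 'I_S -> 'I_A -> R.
Variable eps : R.

Definition minseq (s : seq R) : R :=
  if s is h :: t then foldr Num.min h t else 0.
Definition maxseq (s : seq R) : R :=
  if s is h :: t then foldr Num.max h t else 0.

Record box := Box { lo : 'I_A -> R; hi : 'I_A -> R }.
Definition node := 'I_K -> box.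

Definition inbox (b : box) (y : 'I_A -> R) : bool :=
  [forall a, (lo b a <= y a) && (y a <= hi b a)].

Definition sqdist (y z : 'I_A -> R) : R := \sum_(a < A) (y a - z a) ^+ 2.

(* min_{mu in b} ||y - mu||^2, attained at the coordinatewise projection
   (clamping) of y onto the box b *)
Definition clamp (b : box) (y : 'I_A -> R) : 'I_A -> R :=
  fun a => Num.min (hi b a) (Num.max (lo b a) (y a)).
Definition boxdist (b : box) (y : 'I_A -> R) : R := sqdist y (clamp b y).

Definition minK (f : 'I_K -> R) : R := minseq [seq f k | k <- enum 'I_K].
Definition maxS (f : 'I_S -> R) : R := maxseq [seq f s | s <- enum 'I_S].

Definition beta (M : node) : R := maxS (fun s => minK (fun k => boxdist (M k) (x s))).

(* a candidate solution: centers mu^k = x_(c k) in X *)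
Definition obj (c : 'I_K -> 'I_S) : R :=
  maxS (fun s => minK (fun k => sqdist (x s) (x (c k)))).
Definition optimal (c : 'I_K -> 'I_S) : Prop := forall c', obj c <= obj c'.
Definition feasible_in (M : node) (c : 'I_K -> 'I_S) : Prop :=
  forall k, inbox (M k) (x (c k)).

Definition M0 : node := fun _ =>
  Box (fun a => minseq [seq x s a | s <- enum 'I_S])
      (fun a => maxseq [seq x s a | s <- enum 'I_S]).

Definition hassample (b : box) : bool := [exists s, inbox b (x s)].
Definition has2 (b : box) : bool :=
  [exists s, exists t, [&& inbox b (x s), inbox b (x t) &
                            [exists a, x s a != x t a]]].

Definition bbox (b : box) : box :=
  Box (fun a => minseq [seq x s a | s <- enum 'I_S & inbox b (x s)])
      (fun a => maxseq [seq x s a | s <- enum 'I_S & inbox b (x s)]).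

Definition subbox (b' b : box) : Prop :=
  forall a, lo b a <= lo b' a /\ hi b' a <= hi b a.

Definition range (M : node) (k : 'I_K) (a : 'I_A) : R := hi (M k) a - lo (M k) a.

Definition midp (M : node) k a : R := (lo (M k) a + hi (M k) a) / 2.
Definition child_lo (M : node) k a : node := fun k' =>
  if k' == k then Box (lo (M k)) (fun a' => if a' == a then midp M k a else hi (M k) a')
  else M k'.
Definition child_hi (M : node) k a : node := fun k' =>
  if k' == k then Box (fun a' => if a' == a then midp M k a else lo (M k) a') (hi (M k))
  else M k'.
Definition children (M : node) k a : seq node :=
  [seq C <- [:: child_lo M k a; child_hi M k a] | [forall k', hassample (C k')]].

(* state: running with (node list, best upper bound alpha), or stopped *)
Inductive state := Run of seq node & R | Done.

Definition remove_nth (L : seq node) (i : nat) : seq node := take i L ++ drop i.+1 L.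

Definition finish (L' : seq node) (alpha' : R) : state :=
  if L' is [::] then Done else
  let betai := minseq [seq beta N | N <- L'] in
  let L'' := [seq N <- L' | beta N < alpha'] in
  if L'' is [::] then Done else
  if alpha' - betai <= eps then Done else Run L'' alpha'.

Definition step (st st' : state) : Prop :=
  match st with
  | Done => False
  | Run L alpha =>
    exists (i : nat) (Mdef : node),
      (i < size L)%N /\
      (forall j, (j < size L)%N -> beta (nth Mdef L i) <= beta (nth Mdef L j)) /\
      let M := nth Mdef L i in
      (* tightening: shrink boxes without excluding optimal solutions *)
      exists M'' : node,
        (forall k, subbox (M'' k) (M k)) /\
        (forall c, optimal c -> feasible_in M c -> feasible_in M'' c) /\
        exists (newnodes : seq node) (alpha' : R),
          ((~~ [forall k, hassample (M'' k)] /\ newnodes = [::] /\ alpha' = alpha)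
           \/
           ([forall k, hassample (M'' k)] /\
            let M' : node := fun k => bbox (M'' k) in
            (alpha' = alpha \/
             exists c, feasible_in M' c /\ alpha' = Num.min alpha (obj c)) /\
            (if [exists k, has2 (M' k)] then
               exists k a, (forall k' a', range M' k' a' <= range M' k a) /\
                           newnodes = children M' k a
             else newnodes = [::]))) /\
          st' = finish (remove_nth L i ++ newnodes) alpha'
  end.

Inductive terminates : state -> Prop :=
| term_done : terminates Done
| term_step st : (exists st', step st st') ->
                 (forall st', step st st' -> terminates st') -> terminates st.

End KCenterBB.

(* Main.v *)
Require Import Defs.
From HB Require Import structures.
From mathcomp Require Import all_boot all_order all_algebra.
From mathcomp Require Import reals.
From mathcomp Require Import lra zify.
Import Order.TTheory GRing.Theory Num.Theory.
Local Open Scope ring_scope.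

Set Implicit Arguments.
Unset Strict Implicit.
Unset Printing Implicit Defensive.

Section Aux.
Variable R : realType.

Lemma minseq_le (h : R) t y : y \in h :: t -> minseq (h :: t) <= y.
Proof.
rewrite /=; elim: t y => [|z t IH] y /=; first by rewrite inE => /eqP ->.
rewrite !inE => /orP [/eqP ->| /orP [/eqP ->|yt]]; rewrite ge_min.
- by apply/orP; right; apply: IH; rewrite inE eqxx.
- by rewrite lexx.
- by apply/orP; right; apply: IH; rewrite inE yt orbT.
Qed.

Lemma minseq_mem (h : R) t : minseq (h :: t) \in h :: t.
Proof.
rewrite /=; elim: t => [|z t IH] /=; first by rewrite inE.
rewrite /Num.min; case: ifP => _; first by rewrite !inE eqxx orbT.
move: IH; rewrite !inE => /orP [->|->] //; by rewrite !orbT.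
Qed.

Lemma maxseq_ge (h : R) t y : y \in h :: t -> y <= maxseq (h :: t).
Proof.
rewrite /=; elim: t y => [|z t IH] y /=; first by rewrite inE => /eqP ->.
rewrite !inE => /orP [/eqP ->| /orP [/eqP ->|yt]]; rewrite le_max.
- by apply/orP; right; apply: IH; rewrite inE eqxx.
- by rewrite lexx.
- by apply/orP; right; apply: IH; rewrite inE yt orbT.
Qed.

Lemma maxseq_mem (h : R) t : maxseq (h :: t) \in h :: t.
Proof.
rewrite /=; elim: t => [|z t IH] /=; first by rewrite inE.
rewrite /Num.max; case: ifP => _; last by rewrite !inE eqxx orbT.
move: IH; rewrite !inE => /orP [->|->] //; by rewrite !orbT.
Qed.

Lemma seq_max (T : eqType) (f : T -> R) h s :
  exists2 y, y \in h :: s & forall z, z \in h :: s -> f z <= f y.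
Proof.
elim: s => [|w s [m mI mM]]; first by exists h; [rewrite inE | move=> z; rewrite inE => /eqP ->].
have [le|lt] := leP (f w) (f m).
  exists m; first by move: mI; rewrite !inE => /orP [->|->]; rewrite ?orbT.
  move=> z; rewrite !inE => /orP [zh|/orP [/eqP -> //|zs]]; apply: mM;
  by rewrite inE ?zh ?zs ?orbT.
exists w; first by rewrite !inE eqxx orbT.
move=> z; rewrite !inE => /orP [zh|/orP [/eqP -> //|zs]];
  apply: le_trans (ltW lt); apply: mM; by rewrite inE ?zh ?zs ?orbT.
Qed.

End Aux.
Section Box.
Variable R : realType.
Variables (S A K : nat).
Variable x : 'I_S -> 'I_A -> R.

Lemma inboxP (b : box R A) y :
  reflect (forall a, lo b a <= y a /\ y a <= hi b a) (inbox b y).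
Proof.
apply: (iffP forallP) => H a; first by have /andP [] := H a.
by have [-> ->] := H a.
Qed.

Definition lst (b : box R A) a := [seq x s a | s <- enum 'I_S & inbox b (x s)].

Lemma mem_lst b a v : v \in lst b a -> exists s, inbox b (x s) /\ v = x s a.
Proof. by case/mapP => s; rewrite mem_filter => /andP [H _] ->; exists s. Qed.

Lemma lst_mem b a s : inbox b (x s) -> x s a \in lst b a.
Proof. by move=> H; apply: map_f; rewrite mem_filter H mem_enum. Qed.

Lemma lo_bbox_le b a s : inbox b (x s) -> lo (bbox x b) a <= x s a.
Proof.
move=> H; have := lst_mem a H; rewrite /= -/(lst b a).
by case: (lst b a) => [//|h t]; apply: minseq_le.
Qed.

Lemma hi_bbox_ge b a s : inbox b (x s) -> x s a <= hi (bbox x b) a.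
Proof.
move=> H; have := lst_mem a H; rewrite /= -/(lst b a).
by case: (lst b a) => [//|h t]; apply: maxseq_ge.
Qed.

Lemma lo_bbox_mem b a : hassample x b ->
  exists s, inbox b (x s) /\ x s a = lo (bbox x b) a.
Proof.
case/existsP => s0 H0; have := lst_mem a H0; rewrite /= -/(lst b a).
case E: (lst b a) => [//|h t] _.
have := minseq_mem h t; rewrite -E => /mem_lst [s [Hs ->]]; by exists s.
Qed.

Lemma hi_bbox_mem b a : hassample x b ->
  exists s, inbox b (x s) /\ x s a = hi (bbox x b) a.
Proof.
case/existsP => s0 H0; have := lst_mem a H0; rewrite /= -/(lst b a).
case E: (lst b a) => [//|h t] _.
have := maxseq_mem h t; rewrite -E => /mem_lst [s [Hs ->]]; by exists s.
Qed.

Lemma in_bbox b s : inbox b (x s) -> inbox (bbox x b) (x s).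
Proof. by move=> H; apply/inboxP => a; split; [apply: lo_bbox_le | apply: hi_bbox_ge]. Qed.

Lemma bbox_sub b y : hassample x b -> inbox (bbox x b) y -> inbox b y.
Proof.
move=> hs /inboxP H; apply/inboxP => a; have [h1 h2] := H a.
have [s [/inboxP Hs E1]] := lo_bbox_mem a hs.
have [t [/inboxP Ht E2]] := hi_bbox_mem a hs.
have [l1 _] := Hs a; have [_ l2] := Ht a.
split; [apply: le_trans l1 _; rewrite E1 // | apply: le_trans _ l2; rewrite E2 //].
Qed.

End Box.
Section Count.
Variable R : realType.
Variables (S A K : nat).
Variable x : 'I_S -> 'I_A -> R.

Definition cnt (b : box R A) := #|[set s | inbox b (x s)]|.
Definition mu (N : node R A K) := (\sum_(k < K) cnt (N k))%N.
Definition W (L : seq (node R A K)) := (\sum_(N <- L) 3 ^ mu N)%N.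

Lemma cnt_le (b b' : box R A) : (forall s, inbox b' (x s) -> inbox b (x s)) -> (cnt b' <= cnt b)%N.
Proof.
move=> H; apply: subset_leq_card; apply/subsetP => s; rewrite !inE; exact: H.
Qed.

Lemma cnt_lt (b b' : box R A) t : (forall s, inbox b' (x s) -> inbox b (x s)) ->
  inbox b (x t) -> ~~ inbox b' (x t) -> (cnt b' < cnt b)%N.
Proof.
move=> H Ht Hn; apply: proper_card; apply/properP; split.
  apply/subsetP => s; rewrite !inE; exact: H.
by exists t; rewrite inE.
Qed.

Lemma subbox_in (b' b : box R A) y : subbox b' b -> inbox b' y -> inbox b y.
Proof.
move=> H /inboxP Hy; apply/inboxP => a; have [h1 h2] := H a; have [l1 l2] := Hy a.
split; [exact: le_trans h1 l1 | exact: le_trans l2 h2].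
Qed.

Lemma children_mu (M M'' : node R A K) k a :
  (forall k, subbox (M'' k) (M k)) -> (forall k, hassample x (M'' k)) ->
  let M' := fun k => bbox x (M'' k) in
  (forall k' a', range M' k' a' <= range M' k a) ->
  (exists k0, has2 x (M' k0)) ->
  forall C : node R A K, List.In C (children x M' k a) -> (mu C < mu M)%N.
Proof.
move=> Hsub Hs M' Hmax [k0 H2] C.
have pos : lo (M' k) a < hi (M' k) a.
  move: H2 => /existsP [s /existsP [t /and3P [/inboxP Hs1 /inboxP Ht1 /existsP [a0 Hne]]]].
  have := Hmax k0 a0; rewrite /range.
  have [l1 l2] := Hs1 a0; have [l3 l4] := Ht1 a0.
  have [lt|gt|eq] := ltgtP (x s a0) (x t a0); last by rewrite eq eqxx in Hne.
    lra. lra.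
have [hm1 hm2] := midf_lt pos.
have [sl [Hsl Esl]] := lo_bbox_mem a (Hs k).
have [th [Hth Eth]] := hi_bbox_mem a (Hs k).
have MM : forall k' s, inbox (M' k') (x s) -> inbox (M k') (x s).
  move=> k' s H; apply: subbox_in (Hsub k') _; exact: bbox_sub (Hs k') H.
have key : forall C : node R A K, (forall k' s, k' != k -> inbox (C k') (x s) -> inbox (M' k') (x s)) ->
   (cnt (C k) < cnt (M k))%N -> (mu C < mu M)%N.
  move=> C0 HC Hk; rewrite /mu (bigD1 k) //= [X in (_ < X)%N](bigD1 k) //=.
  have : (\sum_(i < K | i != k) cnt (C0 i) <= \sum_(i < K | i != k) cnt (M i))%N.
    apply: leq_sum => i ik; apply: cnt_le => s H; apply: MM; exact: HC.
  move=> L; rewrite -addSn; exact: leq_add.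
move=> HC0; have HC : C = child_lo M' k a \/ C = child_hi M' k a.
  by move: HC0; rewrite /children /=; do 2 case: ifP => _ /=; intuition.
case: HC => ->; apply: key.
- by move=> k' s kk; rewrite /child_lo (negbTE kk).
- apply: (cnt_lt (t := th)) => //.
    move=> s; rewrite /child_lo /= eqxx => /inboxP H; apply: MM; apply/inboxP => a'.
    have [l1 l2] := H a'; split; first exact: l1; try exact: l2.
    case: (eqVneq a' a) l2 => [->|ne] l2; last by move: l2 => /=; rewrite (negbTE ne).
    move: l2 => /=; rewrite eqxx => l2; exact: le_trans l2 (ltW hm2).
  exact: subbox_in (Hsub k) Hth.
  rewrite /child_lo /= eqxx; apply/negP => /inboxP H; have [_ l2] := H a.
  move: l2 => /=; rewrite eqxx /midp.
  have -> : x th a = hi (M' k) a by exact: Eth.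
  lra.
- by move=> k' s kk; rewrite /child_hi (negbTE kk).
- apply: (cnt_lt (t := sl)) => //.
    move=> s; rewrite /child_hi /= eqxx => /inboxP H; apply: MM; apply/inboxP => a'.
    have [l1 l2] := H a'; split; last exact: l2.
    case: (eqVneq a' a) l1 => [->|ne] l1; last by move: l1 => /=; rewrite (negbTE ne).
    move: l1 => /=; rewrite eqxx => l1; exact: le_trans (ltW hm1) l1.
  exact: subbox_in (Hsub k) Hsl.
  rewrite /child_hi /= eqxx; apply/negP => /inboxP H; have [l1 _] := H a.
  move: l1 => /=; rewrite eqxx /midp.
  have -> : x sl a = lo (M' k) a by exact: Esl.
  lra.
Qed.

End Count.
Section Main.
Variable R : realType.
Variables (S A K : nat).
Variable x : 'I_S -> 'I_A -> R.
Variable eps : R.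

Lemma step_exists (L : seq (node R A K)) alpha : L <> [::] ->
  exists st', step x eps (Run L alpha) st'.
Proof.
case: L => [//|N0 L'] _; set L := N0 :: L'.
have [i iI iM] := seq_max (fun i => - beta x (nth N0 L i)) 0 (iota 1 (size L')).
have isz : (i < size L)%N.
  by move: iI; rewrite -[0 :: _]/(iota 0 (size L)) mem_iota.
set M := nth N0 L i.
case Hs: [forall k, hassample x (M k)]; last first.
  exists (finish x eps (remove_nth L i ++ [::]) alpha).
  unfold step. exists (i : nat), N0.
  split => //; split.
    move=> j jL; rewrite -lerN2; apply: iM.
    by rewrite -[0 :: _]/(iota 0 (size L)) mem_iota.
  exists M; split; first by move=> k a; rewrite !lexx.
  split => //.
  exists [::], alpha; split => //; left; by rewrite Hs.
set M' := fun k => bbox x (M k).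
case Hex: [exists k, has2 x (M' k)].
  have [k0 H2] := existsP Hex.
  have [a0 _] : exists a0 : 'I_A, true.
    move: H2 => /existsP [s /existsP [t /and3P [_ _ /existsP [a0 _]]]]; by exists a0.
  have [p _ kaM] := seq_max (fun p : 'I_K * 'I_A => range M' p.1 p.2) (k0, a0) (enum [pred _ : 'I_K * 'I_A | true]).
  case: p kaM => k a kaM.
  exists (finish x eps (remove_nth L i ++ children x M' k a) alpha).
  unfold step. exists (i : nat), N0.
  split => //; split.
    move=> j jL; rewrite -lerN2; apply: iM.
    by rewrite -[0 :: _]/(iota 0 (size L)) mem_iota.
  exists M; split; first by move=> k' a'; rewrite !lexx.
  split => //.
  exists (children x M' k a), alpha; split => //; right; split => //.
  cbv zeta; split; first by left.
  rewrite Hex; exists k, a; split => //.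
  move=> k' a'; apply: (kaM (k', a')); by rewrite inE mem_enum orbT.
exists (finish x eps (remove_nth L i ++ [::]) alpha).
unfold step. exists (i : nat), N0.
split => //; split.
  move=> j jL; rewrite -lerN2; apply: iM.
  by rewrite -[0 :: _]/(iota 0 (size L)) mem_iota.
exists M; split; first by move=> k a; rewrite !lexx.
split => //.
exists [::], alpha; split => //; right; split => //.
cbv zeta; split; first by left.
by rewrite Hex.
Qed.


Lemma W_cat (l1 l2 : seq (node R A K)) : W x (l1 ++ l2) = (W x l1 + W x l2)%N.
Proof. by rewrite /W big_cat. Qed.

Lemma W_remove (L : seq (node R A K)) d i : (i < size L)%N ->
  W x L = (W x (remove_nth L i) + 3 ^ mu x (nth d L i))%N.
Proof.
move=> iL; rewrite /remove_nth W_cat -{1}(cat_take_drop i L) W_cat (drop_nth d iL).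
by rewrite /W big_cons; lia.
Qed.

Lemma W_filter (P : pred (node R A K)) L : (W x [seq N <- L | P N] <= W x L)%N.
Proof.
elim: L => [|N L IH] //=; rewrite /W big_cons; case: (P N) => /=.
  by rewrite big_cons leq_add2l.
exact: leq_trans IH (leq_addl _ _).
Qed.

Lemma W_small (l : seq (node R A K)) n : (size l <= 2)%N ->
  (forall C, List.In C l -> (mu x C < n)%N) -> (W x l < 3 ^ n)%N.
Proof.
have H3 : forall C : node R A K, (mu x C < n)%N -> (3 * 3 ^ mu x C <= 3 ^ n)%N.
  move=> C lt; rewrite -expnS; apply: leq_pexp2l => //.
case: l => [|c1 [|c2 [|c3 l]]] //= _ H.
- by rewrite /W big_nil expn_gt0.
- have := H3 c1 (H c1 (or_introl erefl)); rewrite /W big_cons big_nil.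
  have : (0 < 3 ^ n)%N by rewrite expn_gt0. lia.
- have := H3 c1 (H c1 (or_introl erefl)).
  have := H3 c2 (H c2 (or_intror (or_introl erefl))).
  rewrite /W !big_cons big_nil.
  have : (0 < 3 ^ n)%N by rewrite expn_gt0. lia.
Qed.

Lemma size_children (M : node R A K) k a : (size (children x M k a) <= 2)%N.
Proof. by rewrite /children /=; do 2 case: ifP. Qed.

Lemma term_ind n : forall (L : seq (node R A K)) alpha, (W x L < n)%N -> L <> [::] ->
  terminates x eps (Run L alpha).
Proof.
elim: n => [//|n IH] L alpha Hn HL.
apply: term_step; first exact: step_exists.
move=> st' [i [Md [iL [_ [M'' [Hsub [_ [nn [al' [Hc ->]]]]]]]]]].
set M := nth Md L i in Hsub Hc.
have Hlt : (W x (remove_nth L i ++ nn) < W x L)%N.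
  rewrite W_cat (W_remove Md iL) ltn_add2l -/M.
  case: Hc => [[_ [-> _]]|[Hs [_ Hif]]].
    by rewrite /W big_nil expn_gt0.
  move: Hif; case: ifP => Hex; last by move=> ->; rewrite /W big_nil expn_gt0.
  move=> [k [a [Hmax ->]]]; apply: W_small; first exact: size_children.
  apply: (children_mu (M'' := M'')) => //.
    by move=> k'; apply: (forallP Hs).
  exact/existsP.
rewrite /finish; case E: (remove_nth L i ++ nn) => [|N L1]; first exact: term_done.
set L2 := [seq _ <- _ | _].
case E2: L2 => [|N2 L3]; first exact: term_done.
case: ifP => _; first exact: term_done.
rewrite -E2; apply: IH => //.
  apply: leq_ltn_trans (W_filter _ _) _; rewrite -E; exact: leq_trans Hlt Hn.
by rewrite E2.
Qed.

End Main.

Unset Implicit Arguments.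

Theorem lemma4 (R : realType) (S A K : nat) (x : 'I_S -> 'I_A -> R) (eps : R)
    (c0 : 'I_K -> 'I_S) :
  (0 < S)%N -> (0 < K)%N -> 0 <= eps ->
  @terminates R S A K x eps (Run [:: @M0 R S A K x] (obj x c0)).
Proof.
move=> _ _ _; apply: (@term_ind R S A K x eps (W x [:: M0 x]).+1) => //.
Qed.
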